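(* Let $H$ be a Hopf algebra and $A$ an $H$-Galois object, and let $\mathcal{C}(A,H)$ be its Ehresmann–Schauenburg Hopf algebra. For every character $\phi$ of $\mathcal{C}(A,H)$ (equivalently, every bisection), $Ad_\phi=\mathrm{coinn}(\phi)$, i.e. for all $c\in\mathcal{C}(A,H)$, $$F_\phi(a)\otimes F_\phi(\tilde a)\big|_{c=a\otimes\tilde a}=\phi(c_{(1)})\,c_{(2)}\,\phi(S_{\mathcal C}(c_{(3)})),$$ where $Ad_\phi(a\otimes\tilde a):=F_\phi(a)\otimes F_\phi(\tilde a)$ and $F_\phi(a)=\phi(a_{(0)}\otimes a_{(1)}^{\langle1\rangle})\,a_{(1)}^{\langle2\rangle}$.
   Context: Algebras over $\mathbb{C}$; Sweedler notation with implicit summation. An $H$-Galois object is a right $H$-comodule algebra $A$ (coaction $\delta^A(a)=a_{(0)}\otimes a_{(1)}$) with coinvariants $A^{coH}=\mathbb{C}$ such that $\chi:A\otimes A\to A\otimes H$, $a'\otimes a\mapsto a'a_{(0)}\otimes a_{(1)}$, is bijective; $\tau(h)=\chi^{-1}(1\otimes h)=:h^{\langle1\rangle}\otimes h^{\langle2\rangle}$. $\mathcal{C}(A,H)=(A\otimes A)^{coH}=\{\sum a\otimes\tilde a:\sum a_{(0)}\otimes\tilde a_{(0)}\otimes a_{(1)}\tilde a_{(1)}=\sum a\otimes\tilde a\otimes1\}$ is a Hopf algebra with product $(a\otimes\tilde a)(a'\otimes\tilde a')=aa'\otimes\tilde a'\tilde a$, unit $1\otimes1$, coproduct $\Delta_{\mathcal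 C}(a\otimes\tilde a)=a_{(0)}\otimes a_{(1)}^{\langle1\rangle}\otimes a_{(1)}^{\langle2\rangle}\otimes\tilde a=:c_{(1)}\otimes c_{(2)}$ for $c=a\otimes\tilde a$, counit $\epsilon_{\mathcal C}(a\otimes\tilde a)=a\tilde a$, antipode $S_{\mathcal C}(a\otimes\tilde a)=\tilde a_{(0)}\otimes\tilde a_{(1)}^{\langle1\rangle}a\,\tilde a_{(1)}^{\langle2\rangle}$. A character is a unital algebra map $\phi:\mathcal{C}(A,H)\to\mathbb{C}$. For a character $\phi$ of a Hopf algebra $K$, $\mathrm{coinn}(\phi):K\to K$, $h\mapsto\phi(h_{(1)})h_{(2)}\phi(S(h_{(3)}))$. *)

(* Defs.v *)
(* MathComp has no tensor product of (possibly
   infinite-dimensional) vector spaces, so an element of U (x) V is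
   represented by a formal finite sum  sum_i u_i (x) v_i , i.e. a
   [seq (U * V)], and two formal sums are declared equal as tensors
   ([teq2]) when every bilinear map into every vector space takes the
   same value on them (universal property of the tensor product: this
   is exactly equality in U (x) V). *)
From HB Require Import structures.
From mathcomp Require Import all_boot all_algebra.
From mathcomp Require Import complex Rstruct.

Set Implicit Arguments.
Unset Strict Implicit.
Unset Printing Implicit Defensive.

Import GRing.Theory.
Local Open Scope ring_scope.

Definition CC : fieldType := complex.complex Rdefinitions.R.

Section Tensors.
Variable K : fieldType.

Definition lin (U M : lmodType K) (f : U -> M) : Prop :=
  forall a x y, f (a *: x + y) = a *: f x + f y.

Definition bil (U V M : lmodType K) (b : U -> V -> M) : Prop :=
  (forall v, lin (fun u => b u v)) /\ (forall u, lin (b u)).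

Definition tril (U V W M : lmodType K) (t : U -> V -> W -> M) : Prop :=
  [/\ forall v w, lin (fun u => t u v w),
      forall u w, lin (fun v => t u v w) &
      forall u v, lin (t u v)].

Definition quadril (U V W X M : lmodType K) (t : U -> V -> W -> X -> M) : Prop :=
  [/\ forall v w x, lin (fun u => t u v w x),
      forall u w x, lin (fun v => t u v w x),
      forall u v x, lin (fun w => t u v w x) &
      forall u v w, lin (t u v w)].

Definition teq2 (U V : lmodType K) (s t : seq (U * V)) : Prop :=
  forall (M : lmodType K) (b : U -> V -> M), bil b ->
    \sum_(p <- s) b p.1 p.2 = \sum_(p <- t) b p.1 p.2.

Definition teq3 (U V W : lmodType K) (s t : seq (U * V * W)) : Prop :=
  forall (M : lmodType K) (b : U -> V -> W -> M), tril b ->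
    \sum_(p <- s) b p.1.1 p.1.2 p.2 = \sum_(p <- t) b p.1.1 p.1.2 p.2.

Definition teq4 (U V W X : lmodType K) (s t : seq (U * V * W * X)) : Prop :=
  forall (M : lmodType K) (b : U -> V -> W -> X -> M), quadril b ->
    \sum_(p <- s) b p.1.1.1 p.1.1.2 p.1.2 p.2 =
    \sum_(p <- t) b p.1.1.1 p.1.1.2 p.1.2 p.2.

Definition tscale (U V : lmodType K) (a : K) (s : seq (U * V)) : seq (U * V) :=
  [seq (a *: p.1, p.2) | p <- s].

Record is_hopf (H : algType K) (Delta : H -> seq (H * H)) (eps : H -> K)
    (S : H -> H) : Prop := {
  hopf_Delta_lin : forall a x y,
    teq2 (Delta (a *: x + y)) (tscale a (Delta x) ++ Delta y);
  hopf_Delta_mul : forall x y,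
    teq2 (Delta (x * y)) [seq (p.1 * q.1, p.2 * q.2) | p <- Delta x, q <- Delta y];
  hopf_Delta_1 : teq2 (Delta 1) [:: (1, 1)];
  hopf_coassoc : forall x,
    teq3 [seq (q.1, q.2, p.2) | p <- Delta x, q <- Delta p.1]
         [seq (p.1, q.1, q.2) | p <- Delta x, q <- Delta p.2];
  hopf_eps_lin : forall a x y, eps (a *: x + y) = a * eps x + eps y;
  hopf_eps_mul : forall x y, eps (x * y) = eps x * eps y;
  hopf_eps_1 : eps 1 = 1;
  hopf_counitl : forall x, \sum_(p <- Delta x) eps p.1 *: p.2 = x;
  hopf_counitr : forall x, \sum_(p <- Delta x) eps p.2 *: p.1 = x;
  hopf_S_lin : forall a x y, S (a *: x + y) = a *: S x + S y;
  hopf_antipodel : forall x, \sum_(p <- Delta x) S p.1 * p.2 = (eps x)%:A;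
  hopf_antipoder : forall x, \sum_(p <- Delta x) p.1 * S p.2 = (eps x)%:A
}.

Section Galois.
Variables (H A : algType K) (Delta : H -> seq (H * H)) (eps : H -> K)
          (delta : A -> seq (A * H)).

Definition galois_map (s : seq (A * A)) : seq (A * H) :=
  [seq (p.1 * q.1, q.2) | p <- s, q <- delta p.2].

Record is_galois_object : Prop := {
  gal_delta_lin : forall a x y,
    teq2 (delta (a *: x + y)) (tscale a (delta x) ++ delta y);
  gal_delta_mul : forall x y,
    teq2 (delta (x * y)) [seq (p.1 * q.1, p.2 * q.2) | p <- delta x, q <- delta y];
  gal_delta_1 : teq2 (delta 1) [:: (1, 1)];
  gal_coassoc : forall x,
    teq3 [seq (q.1, q.2, p.2) | p <- delta x, q <- delta p.1]
         [seq (p.1, q.1, q.2) | p <- delta x, q <- Delta p.2];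
  gal_counit : forall x, \sum_(p <- delta x) eps p.2 *: p.1 = x;
  gal_coinv : forall x, teq2 (delta x) [:: (x, 1)] -> exists k : K, x = k%:A;
  gal_chi_inj : forall s t, teq2 (galois_map s) (galois_map t) -> teq2 s t;
  gal_chi_surj : forall u, exists s, teq2 (galois_map s) u
}.

Variable tau : H -> seq (A * A).  (* tau h = chi^{-1}(1 (x) h) *)

(* c is in C(A,H) = (A (x) A)^{coH} *)
Definition inES (c : seq (A * A)) : Prop :=
  teq3 (flatten [seq [seq (q.1, r.1, q.2 * r.2) | q <- delta p.1, r <- delta p.2]
                | p <- c])
       [seq (p.1, p.2, 1) | p <- c].

Definition ES_mul (c d : seq (A * A)) : seq (A * A) :=
  [seq (p.1 * q.1, q.2 * p.2) | p <- c, q <- d].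

Definition ES_unit : seq (A * A) := [:: (1, 1)].

Definition ES_coprod (c : seq (A * A)) : seq (A * A * A * A) :=
  flatten [seq [seq (q.1, r.1, r.2, p.2) | q <- delta p.1, r <- tau q.2] | p <- c].

Definition ES_antipode (c : seq (A * A)) : seq (A * A) :=
  flatten [seq [seq (q.1, r.1 * p.1 * r.2) | q <- delta p.2, r <- tau q.2] | p <- c].

(* phi : C(A,H) -> K is a character (unital algebra map); phi is given on
   representatives and only its behaviour on C(A,H) matters. *)
Record is_character (phi : seq (A * A) -> K) : Prop := {
  char_welldef : forall c d, inES c -> teq2 c d -> phi c = phi d;
  char_lin : forall a c d, inES c -> inES d -> phi (tscale a c ++ d) = a * phi c + phi d;
  char_mul : forall c d, inES c -> inES d -> phi (ES_mul c d) = phi c * phi d;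
  char_unit : phi ES_unit = 1
}.

(* y = (phi (x) id)(T) for T in C(A,H) (x) A, computed through a
   decomposition T = sum_j c_j (x) x_j with c_j in C(A,H) *)
Definition phi_id (phi : seq (A * A) -> K) (T : seq (A * A * A)) (y : A) : Prop :=
  exists D : seq (seq (A * A) * A),
    [/\ {in D, forall d, inES d.1},
        teq3 T (flatten [seq [seq (q.1, q.2, d.2) | q <- d.1] | d <- D]) &
        y = \sum_(d <- D) phi d.1 *: d.2].

Definition Fphi_spec (phi : seq (A * A) -> K) (F : A -> A) : Prop :=
  forall a, phi_id phi
    (flatten [seq [seq (p.1, q.1, q.2) | q <- tau p.2] | p <- delta a]) (F a).

Definition Ad (F : A -> A) (c : seq (A * A)) : seq (A * A) :=
  [seq (F p.1, F p.2) | p <- c].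

Definition decompCC (X : seq (A * A * A * A)) (D : seq (seq (A * A) * seq (A * A)))
    : Prop :=
  {in D, forall d, inES d.1 /\ inES d.2} /\
  teq4 X (flatten [seq [seq (u.1, u.2, v.1, v.2) | u <- d.1, v <- d.2] | d <- D]).

(* Y = coinn(phi)(c) = phi(c_(1)) c_(2) phi(S_C(c_(3))), computed as
   (phi (x) ((id (x) phi o S_C) o Delta_C)) (Delta_C c), using decompositions
   Delta_C c = sum_j d_j (x) e_j  and  Delta_C e_j = sum_k f_jk (x) g_jk
   in C(A,H) (x) C(A,H):
   Y = sum_j phi(d_j) sum_k phi(S_C g_jk) f_jk. *)
Definition coinn_val (phi : seq (A * A) -> K) (c Y : seq (A * A)) : Prop :=
  exists D : seq (seq (A * A) * seq (A * A) * seq (seq (A * A) * seq (A * A))),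
    [/\ decompCC (ES_coprod c) [seq x.1 | x <- D],
        {in D, forall x, decompCC (ES_coprod x.1.2) x.2} &
        teq2 Y (flatten [seq tscale (phi x.1.1)
                   (flatten [seq tscale (phi (ES_antipode g.2)) g.1 | g <- x.2])
                 | x <- D])].

End Galois.
End Tensors.

(* Main.v *)
Require Import Defs.
From HB Require Import structures.
From mathcomp Require Import all_boot all_algebra.
From mathcomp Require Import complex Rstruct.
From mathcomp Require boolp classical_sets.
Set Implicit Arguments. Unset Strict Implicit. Unset Printing Implicit Defensive.
Import GRing.Theory.
Local Open Scope ring_scope.


Lemma scCC (a z : CC) : a *: z = a * z. Proof. by []. Qed.

Section LinGen.
Implicit Types (U V W M : lmodType CC).

Lemma linD U M (f : U -> M) : lin f -> forall x y, f (x + y) = f x + f y.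
Proof. by move=> hf x y; rewrite -[x in LHS]scale1r hf scale1r. Qed.
Lemma lin0 U M (f : U -> M) : lin f -> f 0 = 0.
Proof. by move=> hf; apply: (addrI (f 0)); rewrite -linD // !addr0. Qed.
Lemma linZ U M (f : U -> M) : lin f -> forall a x, f (a *: x) = a *: f x.
Proof. by move=> hf a x; rewrite -[a *: x]addr0 hf lin0 // addr0. Qed.
Lemma linS U M (f : U -> M) : lin f -> forall I (s : seq I) F, f (\sum_(i <- s) F i) = \sum_(i <- s) f (F i).
Proof.
move=> hf I s F; elim: s => [|i s IH]; first by rewrite !big_nil lin0.
by rewrite !big_cons linD // IH.
Qed.

Lemma lin_sum U M I (s : seq I) (F : I -> U -> M) :
  (forall i, lin (F i)) -> lin (fun x => \sum_(i <- s) F i x).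
Proof.
move=> hF a x y; rewrite scaler_sumr -big_split /=; apply: eq_bigr => i _; exact: hF.
Qed.
Lemma lin_add U M (f g : U -> M) : lin f -> lin g -> lin (fun x => f x + g x).
Proof. by move=> hf hg a x y; rewrite hf hg scalerDr addrACA. Qed.
Lemma lin_scal U M (c : CC) (f : U -> M) : lin f -> lin (fun x => c *: f x).
Proof. by move=> hf a x y; rewrite hf scalerDr !scalerA mulrC. Qed.
Lemma lin_scv U M (p : U -> CC) (m : M) : lin p -> lin (fun x => p x *: m).
Proof. by move=> hp a x y; rewrite hp scalerDl scalerA. Qed.
Lemma lin_mulc U (p : U -> CC) (c : CC) : lin p -> lin (fun x => p x * c).
Proof. by move=> hp a x y; rewrite hp mulrDl !scCC mulrA. Qed.
Lemma lin_cmul U (p : U -> CC) (c : CC) : lin p -> lin (fun x => c * p x).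
Proof. by move=> hp a x y; rewrite hp mulrDr !scCC mulrCA. Qed.
Lemma lin_comp U V M (L : U -> V) (f : V -> M) : lin L -> lin f -> lin (fun x => f (L x)).
Proof. by move=> hL hf a x y; rewrite hL hf. Qed.
Lemma lin_id U : lin (fun x : U => x).
Proof. by []. Qed.
Lemma lin_mull (B : algType CC) (u : B) : lin (fun x => u * x).
Proof. by move=> a x y; rewrite mulrDr; congr (_ + _); rewrite scalerAr. Qed.
Lemma lin_mulr (B : algType CC) (u : B) : lin (fun x => x * u).
Proof. by move=> a x y; rewrite mulrDl; congr (_ + _); rewrite scalerAl. Qed.
Lemma lin_mullr (B : algType CC) (u v : B) : lin (fun x => u * x * v).
Proof. by move=> a x y; rewrite mulrDr mulrDl; congr (_ + _); rewrite -scalerAr -scalerAl. Qed.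
End LinGen.

Section LinMore.
Implicit Types (U V W X M : lmodType CC).
Lemma lin_mullC (B : algType CC) U (L : U -> B) (u : B) : lin L -> lin (fun x => u * L x).
Proof. by move=> hL; exact: (lin_comp hL (lin_mull u)). Qed.
Lemma lin_mulrC (B : algType CC) U (L : U -> B) (u : B) : lin L -> lin (fun x => L x * u).
Proof. by move=> hL; exact: (lin_comp hL (lin_mulr u)). Qed.
Lemma lin_b1 U V M (b : U -> V -> M) (T : lmodType CC) (L : T -> U) v : bil b -> lin L -> lin (fun x => b (L x) v).
Proof. move=> [h1 _] hL; exact: (lin_comp (f := fun z => b z v) hL (ltac:(apply: h1))). Qed.
Lemma lin_b2 U V M (b : U -> V -> M) (T : lmodType CC) (L : T -> V) u : bil b -> lin L -> lin (fun x => b u (L x)).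
Proof. move=> [_ h1] hL; exact: (lin_comp (f := fun z => b u z) hL (ltac:(apply: h1))). Qed.
Lemma lin_t1 U V W M (b : U -> V -> W -> M) (T : lmodType CC) (L : T -> U) v w : tril b -> lin L -> lin (fun x => b (L x) v w).
Proof. move=> [h1 _ _] hL; exact: (lin_comp (f := fun z => b z v w) hL (ltac:(apply: h1))). Qed.
Lemma lin_t2 U V W M (b : U -> V -> W -> M) (T : lmodType CC) (L : T -> V) u w : tril b -> lin L -> lin (fun x => b u (L x) w).
Proof. move=> [_ h1 _] hL; exact: (lin_comp (f := fun z => b u z w) hL (ltac:(apply: h1))). Qed.
Lemma lin_t3 U V W M (b : U -> V -> W -> M) (T : lmodType CC) (L : T -> W) u v : tril b -> lin L -> lin (fun x => b u v (L x)).
Proof. move=> [_ _ h1] hL; exact: (lin_comp (f := fun z => b u v z) hL (ltac:(apply: h1))). Qed.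
Lemma lin_q1 U V W X M (b : U -> V -> W -> X -> M) (T : lmodType CC) (L : T -> U) v w y : quadril b -> lin L -> lin (fun x => b (L x) v w y).
Proof. move=> [h1 _ _ _] hL; exact: (lin_comp (f := fun z => b z v w y) hL (ltac:(apply: h1))). Qed.
Lemma lin_q2 U V W X M (b : U -> V -> W -> X -> M) (T : lmodType CC) (L : T -> V) u w y : quadril b -> lin L -> lin (fun x => b u (L x) w y).
Proof. move=> [_ h1 _ _] hL; exact: (lin_comp (f := fun z => b u z w y) hL (ltac:(apply: h1))). Qed.
Lemma lin_q3 U V W X M (b : U -> V -> W -> X -> M) (T : lmodType CC) (L : T -> W) u v y : quadril b -> lin L -> lin (fun x => b u v (L x) y).
Proof. move=> [_ _ h1 _] hL; exact: (lin_comp (f := fun z => b u v z y) hL (ltac:(apply: h1))). Qed.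
Lemma lin_q4 U V W X M (b : U -> V -> W -> X -> M) (T : lmodType CC) (L : T -> X) u v w : quadril b -> lin L -> lin (fun x => b u v w (L x)).
Proof. move=> [_ _ _ h1] hL; exact: (lin_comp (f := fun z => b u v w z) hL (ltac:(apply: h1))). Qed.
Lemma lin_G1 U V M (G : U * V -> M) (T : lmodType CC) (L : T -> U) v : bil (fun u v => G (u, v)) -> lin L -> lin (fun x => G (L x, v)).
Proof. move=> [h1 _] hL; exact: (lin_comp (f := fun z => G (z, v)) hL (ltac:(apply: h1))). Qed.
Lemma lin_G2 U V M (G : U * V -> M) (T : lmodType CC) (L : T -> V) u : bil (fun u v => G (u, v)) -> lin L -> lin (fun x => G (u, L x)).
Proof. move=> [_ h1] hL; exact: (lin_comp (f := fun z => G (u, z)) hL (ltac:(apply: h1))). Qed.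
Lemma lin_f1 U M (f : U -> M) (T : lmodType CC) (L : T -> U) : lin f -> lin L -> lin (fun x => f (L x)).
Proof. by move=> hf hL; apply: lin_comp hL hf. Qed.
Lemma lin_scvC U M (p : U -> CC) (m : M) : lin p -> lin (fun x => p x *: m).
Proof. exact: lin_scv. Qed.
Lemma lin_b2e U V M (b : U -> V -> M) u : bil b -> lin (b u).
Proof. by case=> _ h; exact: h. Qed.
Lemma lin_t3e U V W M (b : U -> V -> W -> M) u v : tril b -> lin (b u v).
Proof. by case=> _ _ h; exact: h. Qed.
Lemma lin_q4e U V W X M (b : U -> V -> W -> X -> M) u v w : quadril b -> lin (b u v w).
Proof. by case=> _ _ _ h; exact: h. Qed.

End LinMore.

Ltac linL :=
  repeat first [ exact: lin_id | apply: lin_mullC | apply: lin_mulrC ].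

Ltac lin_leaf :=
  first [ apply: lin_b1; [assumption| linL] | apply: lin_b2; [assumption|linL]
        | apply: lin_t1; [assumption|linL] | apply: lin_t2; [assumption|linL]
        | apply: lin_t3; [assumption|linL]
        | apply: lin_q1; [assumption|linL] | apply: lin_q2; [assumption|linL]
        | apply: lin_q3; [assumption|linL] | apply: lin_q4; [assumption|linL]
        | apply: lin_G1; [assumption|linL] | apply: lin_G2; [assumption|linL]
        | apply: lin_b2e; assumption | apply: lin_t3e; assumption
        | apply: lin_q4e; assumption
        | assumption
        | apply: lin_f1; [assumption|linL]
        | match goal with h : _ |- _ => apply: h end
        | match goal with |- lin (fun x => ?f (@?L x)) =>
            apply: (@lin_comp _ _ _ L f); [linL | match goal with h : _ |- _ => apply: h end]
          end ].



Section TeqE.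
Implicit Types (U V W X M : lmodType CC).
Lemma teqE2 U V (s t : seq (U * V)) : teq2 s t ->
  forall M (G : U * V -> M), bil (fun u v => G (u, v)) ->
  \sum_(p <- s) G p = \sum_(p <- t) G p.
Proof.
move=> h M G hG; have := h M _ hG.
have E p : G (p.1, p.2) = G p by case: p.
by rewrite (eq_bigr _ (fun p _ => E p)) [in X in _ = X -> _](eq_bigr _ (fun p _ => E p)).
Qed.
Lemma teqE3 U V W (s t : seq (U * V * W)) : teq3 s t ->
  forall M (G : U * V * W -> M), tril (fun u v w => G (u, v, w)) ->
  \sum_(p <- s) G p = \sum_(p <- t) G p.
Proof.
move=> h M G hG; have := h M _ hG.
have E p : G (p.1.1, p.1.2, p.2) = G p by case: p => [[]].
by rewrite (eq_bigr _ (fun p _ => E p)) [in X in _ = X -> _](eq_bigr _ (fun p _ => E p)).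
Qed.
Lemma teqE4 U V W X (s t : seq (U * V * W * X)) : teq4 s t ->
  forall M (G : U * V * W * X -> M), quadril (fun u v w x => G (u, v, w, x)) ->
  \sum_(p <- s) G p = \sum_(p <- t) G p.
Proof.
move=> h M G hG; have := h M _ hG.
have E p : G (p.1.1.1, p.1.1.2, p.1.2, p.2) = G p by case: p => [[[]]].
by rewrite (eq_bigr _ (fun p _ => E p)) [in X in _ = X -> _](eq_bigr _ (fun p _ => E p)).
Qed.
Lemma teq2I U V (s t : seq (U * V)) :
  (forall M (G : U * V -> M), bil (fun u v => G (u, v)) ->
  \sum_(p <- s) G p = \sum_(p <- t) G p) -> teq2 s t.
Proof. by move=> h M b hb; exact: (h M (fun p => b p.1 p.2)). Qed.
Lemma teq3I U V W (s t : seq (U * V * W)) :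
  (forall M (G : U * V * W -> M), tril (fun u v w => G (u, v, w)) ->
  \sum_(p <- s) G p = \sum_(p <- t) G p) -> teq3 s t.
Proof. by move=> h M b hb; exact: (h M (fun p => b p.1.1 p.1.2 p.2)). Qed.
Lemma teq4I U V W X (s t : seq (U * V * W * X)) :
  (forall M (G : U * V * W * X -> M), quadril (fun u v w x => G (u, v, w, x)) ->
  \sum_(p <- s) G p = \sum_(p <- t) G p) -> teq4 s t.
Proof. by move=> h M b hb; exact: (h M (fun p => b p.1.1.1 p.1.1.2 p.1.2 p.2)). Qed.

Lemma sum_tscale U V M (a : CC) (s : seq (U * V)) (G : U * V -> M) :
  (forall v, lin (fun u => G (u, v))) ->
  \sum_(p <- tscale a s) G p = a *: \sum_(p <- s) G p.
Proof.
move=> hG; rewrite big_map scaler_sumr; apply: eq_bigr => p _.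
by rewrite (linZ (hG p.2)); case: p.
Qed.
End TeqE.



Section Main.
Variables (H A : algType CC) (Delta : H -> seq (H * H)) (eps : H -> CC)
    (S : H -> H) (delta : A -> seq (A * H)) (tau : H -> seq (A * A))
    (phi : seq (A * A) -> CC) (F : A -> A).
Hypothesis hH : is_hopf Delta eps S.
Hypothesis hG : is_galois_object Delta eps delta.
Hypothesis htau : forall h, teq2 (galois_map delta (tau h)) [:: (1, h)].
Hypothesis hphi : is_character delta phi.
Hypothesis hF : Fphi_spec delta tau phi F.

Section LinM.
Variable M : lmodType CC.

Lemma lin_delta (G : A * H -> M) : bil (fun u h => G (u, h)) ->
  lin (fun x => \sum_(q <- delta x) G q).
Proof.
move=> hb a x y; rewrite (teqE2 (gal_delta_lin hG a x y) hb) big_cat sum_tscale //.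
by case: hb.
Qed.

Lemma lin_Delta (G : H * H -> M) : bil (fun u h => G (u, h)) ->
  lin (fun x => \sum_(q <- Delta x) G q).
Proof.
move=> hb a x y; rewrite (teqE2 (hopf_Delta_lin hH a x y) hb) big_cat sum_tscale //.
by case: hb.
Qed.

Lemma sum_galois (s : seq (A * A)) (G : A * H -> M) :
  \sum_(p <- galois_map delta s) G p =
  \sum_(p <- s) \sum_(q <- delta p.2) G (p.1 * q.1, q.2).
Proof. by rewrite big_allpairs_dep. Qed.

Lemma sum_tau_galois (h : H) (u : A) (G : A * H -> M) : bil (fun u h => G (u, h)) ->
  \sum_(r <- tau h) \sum_(q <- delta r.2) G (u * (r.1 * q.1), q.2) = G (u, h).
Proof.
move=> hb.
have := teqE2 (htau h) (G := fun p => G (u * p.1, p.2)) _.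
rewrite sum_galois big_seq1 /= mulr1 => -> //.
by case: hb => h1 h2; split=> [v|w]; [apply: lin_comp (h1 v); exact: lin_mull|exact: h2].
Qed.

Lemma galois_tau (h : H) (G : A * H -> M) : bil (fun u h => G (u, h)) ->
  \sum_(r <- tau h) \sum_(q <- delta r.2) G (r.1 * q.1, q.2) = G (1, h).
Proof.
move=> hb; rewrite -(sum_tau_galois h 1 hb); apply: eq_bigr => r _.
by apply: eq_bigr => q _; rewrite mul1r.
Qed.

End LinM.

Lemma galois_cat s t : galois_map delta (s ++ t) = galois_map delta s ++ galois_map delta t.
Proof. by rewrite /galois_map allpairs_cat. Qed.

Lemma lin_tau (M : lmodType CC) (G : A * A -> M) : bil (fun u v => G (u, v)) ->
  lin (fun h => \sum_(r <- tau h) G r).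
Proof.
move=> hb a x y.
have T : teq2 (tau (a *: x + y)) (tscale a (tau x) ++ tau y).
  apply: (gal_chi_inj hG); apply: teq2I => M' G' hG'.
  rewrite galois_cat big_cat !sum_galois galois_tau //.
  rewrite big_map /=.
  rewrite (eq_bigr (fun r => a *: \sum_(q <- delta r.2) G' (r.1 * q.1, q.2))); last first.
    move=> r _; rewrite scaler_sumr; apply: eq_bigr => q _.
    by rewrite -scalerAl (linZ (proj1 hG' _)).
  rewrite -scaler_sumr -!sum_galois.
  rewrite !sum_galois !galois_tau //.
  by case: hG' => _ h2; rewrite h2.
rewrite (teqE2 T hb) big_cat sum_tscale //; by case: hb.
Qed.

Lemma psichi (M : lmodType CC) (G : A * A -> M) : bil (fun u v => G (u, v)) -> forall u v,
  \sum_(q <- delta v) \sum_(r <- tau q.2) G (u * q.1 * r.1, r.2) = G (u, v).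
Proof.
move=> hb u v.
pose s := [seq (u * q.1 * r.1, r.2) | q <- delta v, r <- tau q.2].
have T : teq2 s [:: (u, v)].
  apply: (gal_chi_inj hG); apply: teq2I => M' G' hG'.
  rewrite !sum_galois big_seq1 /= big_allpairs_dep /=.
  apply: eq_bigr => q _.
  rewrite -(sum_tau_galois q.2 (u * q.1) hG').
  by apply: eq_bigr => r _; apply: eq_bigr => q' _; rewrite !mulrA.
by have := teqE2 T hb; rewrite big_seq1 big_allpairs_dep.
Qed.

Section LinL.
Variables (M : lmodType CC) (T : lmodType CC).
Lemma lin_deltaL (L : T -> A) (G : A * H -> M) : lin L -> bil (fun u h => G (u, h)) ->
  lin (fun x => \sum_(q <- delta (L x)) G q).
Proof. by move=> hL hb; exact: (lin_comp hL (lin_delta hb)). Qed.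
Lemma lin_DeltaL (L : T -> H) (G : H * H -> M) : lin L -> bil (fun u h => G (u, h)) ->
  lin (fun x => \sum_(q <- Delta (L x)) G q).
Proof. by move=> hL hb; exact: (lin_comp hL (lin_Delta hb)). Qed.
Lemma lin_tauL (L : T -> H) (G : A * A -> M) : lin L -> bil (fun u h => G (u, h)) ->
  lin (fun x => \sum_(q <- tau (L x)) G q).
Proof. by move=> hL hb; exact: (lin_comp hL (lin_tau hb)). Qed.
End LinL.

Ltac lin_t :=
  repeat match goal with
  | |- bil _ => split => ? /=
  | |- tril _ => split => ? ? /=
  | |- quadril _ => split => ? ? ? /=
  | |- forall _, _ => intro
  | |- lin _ => first [ apply: lin_sum => ? /=
                       | apply: lin_deltaL; [linL| ]
                       | apply: lin_DeltaL; [linL| ]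
                       | apply: lin_tauL; [linL| ]
                       | apply: lin_add
                       | apply: lin_scal
                       | apply: lin_scvC
                       | apply: lin_mulc | apply: lin_cmul
                       | lin_leaf ]
  end.

Section Ids.
Variable M : lmodType CC.

Lemma coassoc_d (T : A -> H -> H -> M) y : tril T ->
  \sum_(q <- delta y) \sum_(q' <- delta q.1) T q'.1 q'.2 q.2 =
  \sum_(q <- delta y) \sum_(p <- Delta q.2) T q.1 p.1 p.2.
Proof. by move=> hT; have := gal_coassoc hG y hT; rewrite !big_allpairs_dep. Qed.

Lemma coassoc_D (T : H -> H -> H -> M) y : tril T ->
  \sum_(q <- Delta y) \sum_(q' <- Delta q.1) T q'.1 q'.2 q.2 =
  \sum_(q <- Delta y) \sum_(p <- Delta q.2) T q.1 p.1 p.2.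
Proof. by move=> hT; have := hopf_coassoc hH y hT; rewrite !big_allpairs_dep. Qed.

Lemma gtau (g : A -> H -> M) h : bil g ->
  \sum_(r <- tau h) \sum_(q <- delta r.2) g (r.1 * q.1) q.2 = g 1 h.
Proof. by move=> hg; exact: (galois_tau h (G := fun p => g p.1 p.2)). Qed.

Lemma psi2 (g : A -> A -> M) u v : bil g ->
  g u v = \sum_(q <- delta v) \sum_(r <- tau q.2) g (u * q.1 * r.1) r.2.
Proof. by move=> hg; rewrite (psichi (G := fun p => g p.1 p.2)). Qed.

Lemma psi3 (X : lmodType CC) (g : A -> A -> X -> M) u v w : tril g ->
  g u v w = \sum_(q <- delta v) \sum_(r <- tau q.2) g (u * q.1 * r.1) r.2 w.
Proof. by case=> h1 h2 _; apply: (psi2 (g := fun a b => g a b w)); split=> *; [apply: h1|apply: h2]. Qed.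

Lemma delta1 (g : A -> H -> M) : bil g -> \sum_(q <- delta 1) g q.1 q.2 = g 1 1.
Proof. by move=> hg; have := gal_delta_1 hG hg; rewrite big_seq1. Qed.

Lemma tau1 (g : A -> A -> M) : bil g -> \sum_(r <- tau 1) g r.1 r.2 = g 1 1.
Proof.
move=> hg; rewrite (psi2 1 1 hg).
rewrite (delta1 (g := fun x k => \sum_(r <- tau k) g (1 * x * r.1) r.2)); last by lin_t.
by apply: eq_bigr => r _; rewrite !mul1r.
Qed.

Lemma T2 (G : A -> A -> H -> M) h : tril G ->
  \sum_(r <- tau h) \sum_(q <- delta r.2) G r.1 q.1 q.2 =
  \sum_(p <- Delta h) \sum_(r <- tau p.1) G r.1 r.2 p.2.
Proof.
move=> hG3.
pose K x k l := \sum_(r' <- tau k) G (x * r'.1) r'.2 l.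
have hK : tril K by rewrite /K; lin_t.
transitivity (\sum_(p <- Delta h) K 1 p.1 p.2).
  transitivity (\sum_(r <- tau h) \sum_(q <- delta r.2) \sum_(q' <- delta q.1) K (r.1 * q'.1) q'.2 q.2).
    apply: eq_bigr => r _; apply: eq_bigr => q _; rewrite (psi3 r.1 q.1 q.2 hG3).
    by apply: eq_bigr => q' _.
  transitivity (\sum_(r <- tau h) \sum_(q <- delta r.2) \sum_(p <- Delta q.2) K (r.1 * q.1) p.1 p.2).
    apply: eq_bigr => r _; apply: (coassoc_d (T := fun x k l => K (r.1 * x) k l)); lin_t.
  by apply: (gtau (g := fun x k => \sum_(p <- Delta k) K x p.1 p.2)); lin_t.
apply: eq_bigr => p _; symmetry.
transitivity (\sum_(r <- tau p.1) \sum_(q <- delta r.2) K (r.1 * q.1) q.2 p.2).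
  apply: eq_bigr => r _; rewrite (psi3 r.1 r.2 p.2 hG3); apply: eq_bigr => q _.
  by apply: eq_bigr => r' _.
by apply: (gtau (g := fun x k => K x k p.2)); lin_t.
Qed.

Lemma delta_mul (g : A -> H -> M) x y : bil g ->
  \sum_(q <- delta (x * y)) g q.1 q.2 =
  \sum_(q <- delta x) \sum_(q' <- delta y) g (q.1 * q'.1) (q.2 * q'.2).
Proof. by move=> hg; have := gal_delta_mul hG x y hg; rewrite big_allpairs_dep. Qed.

Lemma lin_eps : lin eps.
Proof. by move=> a x y; rewrite (hopf_eps_lin hH). Qed.

Lemma lin_S : lin S.
Proof. by move=> a x y; rewrite (hopf_S_lin hH). Qed.

Lemma counit_d (g : A -> M) x : lin g ->
  \sum_(q <- delta x) eps q.2 *: g q.1 = g x.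
Proof.
move=> hg; rewrite -[in RHS](gal_counit hG x) (linS hg); apply: eq_bigr => q _.
by rewrite (linZ hg).
Qed.

Lemma counitl (g : H -> M) x : lin g ->
  \sum_(q <- Delta x) eps q.1 *: g q.2 = g x.
Proof.
move=> hg; rewrite -[in RHS](hopf_counitl hH x) (linS hg); apply: eq_bigr => q _.
by rewrite (linZ hg).
Qed.

Lemma counitr (g : H -> M) x : lin g ->
  \sum_(q <- Delta x) eps q.2 *: g q.1 = g x.
Proof.
move=> hg; rewrite -[in RHS](hopf_counitr hH x) (linS hg); apply: eq_bigr => q _.
by rewrite (linZ hg).
Qed.

Lemma T5 (G : A -> A -> A -> M) h : tril G ->
  \sum_(p <- Delta h) \sum_(r <- tau p.1) \sum_(s <- tau p.2) G r.1 (r.2 * s.1) s.2 =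
  \sum_(r <- tau h) G r.1 1 r.2.
Proof.
move=> hG3; have [g1 g2 g3] := hG3.
pose K x y k := \sum_(r' <- tau k) G x (y * r'.1) r'.2.
have hK : tril K by rewrite /K; lin_t.
have E x y z : G x y z = \sum_(q <- delta z) K x (y * q.1) q.2.
  by rewrite (psi2 (g := fun a b => G x a b) y z).
transitivity (\sum_(p <- Delta h) \sum_(r <- tau p.1) K r.1 (r.2 * 1) p.2).
  apply: eq_bigr => p _; apply: eq_bigr => r _.
  rewrite -(gtau (g := fun x k => K r.1 (r.2 * x) k)); last by lin_t.
  apply: eq_bigr => s _; rewrite E; apply: eq_bigr => q _; by rewrite mulrA.
transitivity (\sum_(r <- tau h) \sum_(q <- delta r.2) K r.1 (1 * q.1) q.2).
  rewrite (T2 (G := fun a b k => K a (1 * b) k)); last by lin_t.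
  by apply: eq_bigr => p _; apply: eq_bigr => r _; rewrite mulr1 mul1r.
by apply: eq_bigr => r _; rewrite E.
Qed.

End Ids.

Lemma T4 h : \sum_(r <- tau h) r.1 * r.2 = eps h *: 1.
Proof.
have leps := lin_eps.
transitivity (\sum_(r <- tau h) \sum_(q <- delta r.2) eps q.2 *: (r.1 * q.1)).
  apply: eq_bigr => r _; rewrite (counit_d (g := fun z => r.1 * z)) //; exact: lin_mull.
by apply: (gtau (g := fun x k => eps k *: x)); lin_t.
Qed.

Section Ids2.
Variable M : lmodType CC.

Lemma K1 (T : A -> H -> H -> M) h : tril T ->
  \sum_(r <- tau h) \sum_(q <- delta r.1) \sum_(q' <- delta r.2) \sum_(p <- Delta q'.2)
     T (q.1 * q'.1) (q.2 * p.1) p.2 = T 1 1 h.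
Proof.
move=> hT; have [t1 t2 t3] := hT.
pose Y x a k l := \sum_(q <- delta x) T (q.1 * a) (q.2 * k) l.
have hY : quadril Y by rewrite /Y; lin_t.
transitivity (\sum_(r <- tau h) \sum_(q' <- delta r.2) \sum_(q'' <- delta q'.1) Y r.1 q''.1 q''.2 q'.2).
  apply: eq_bigr => r _; rewrite exchange_big /=.
  rewrite (coassoc_d (T := fun a k l => Y r.1 a k l)); last by lin_t.
  apply: eq_bigr => q' _; rewrite /Y exchange_big /=.
  by apply: eq_bigr => p _.
rewrite (T2 (G := fun x y k => \sum_(q'' <- delta y) Y x q''.1 q''.2 k)); last by lin_t.
transitivity (\sum_(p <- Delta h) eps p.1 *: \sum_(q <- delta 1) T q.1 q.2 p.2).
  apply: eq_bigr => p _.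
  transitivity (\sum_(r <- tau p.1) \sum_(q <- delta (r.1 * r.2)) T q.1 q.2 p.2).
    apply: eq_bigr => r _; rewrite (delta_mul (g := fun a k => T a k p.2)); last by lin_t.
    by rewrite /Y exchange_big.
  have hl : lin (fun z => \sum_(q <- delta z) T q.1 q.2 p.2) by lin_t.
  by rewrite -(linS hl) T4 (linZ hl).
rewrite (eq_bigr (fun p => eps p.1 *: T 1 1 p.2)); last first.
  by move=> p _; rewrite (delta1 (g := fun a k => T a k p.2)) //; lin_t.
by rewrite (counitl (g := fun l => T 1 1 l)) //; lin_t.
Qed.

Lemma Anti3 (W : H -> H -> M) y c : bil W ->
  \sum_(p <- Delta y) \sum_(p' <- Delta p.2) W p'.2 (c * p.1 * S p'.1) = W y c.
Proof.
move=> hW; have [w1 w2] := hW.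
rewrite -(coassoc_D (T := fun a b d => W d (c * a * S b))); last first.
  have lS := lin_S; lin_t.
transitivity (\sum_(p <- Delta y) eps p.1 *: W p.2 c).
  apply: eq_bigr => p _.
  have hl : lin (fun z => W p.2 (c * z)) by lin_t.
  transitivity (\sum_(p' <- Delta p.1) W p.2 (c * (p'.1 * S p'.2))).
    by apply: eq_bigr => p' _; rewrite mulrA.
  by rewrite -(linS hl) (hopf_antipoder hH) -scalerAr mulr1 (linZ (w2 _)).
by rewrite (counitl (g := fun k => W k c)) //; lin_t.
Qed.

Lemma T3 (G : A -> A -> H -> M) h : tril G ->
  \sum_(r <- tau h) \sum_(q <- delta r.1) G q.1 r.2 q.2 =
  \sum_(p <- Delta h) \sum_(r <- tau p.2) G r.1 r.2 (S p.1).
Proof.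
move=> hG3; have [g1 g2 g3] := hG3; have lS := lin_S.
pose K x k l := \sum_(r' <- tau k) G (x * r'.1) r'.2 l.
have hK : tril K by rewrite /K; lin_t.
have E x y l : G x y l = \sum_(q <- delta y) K (x * q.1) q.2 l.
  by rewrite (psi3 x y l hG3).
transitivity (\sum_(p <- Delta h) K 1 p.2 (S p.1)); last first.
  apply: eq_bigr => p _; symmetry.
  rewrite -(gtau (g := fun x k => K x k (S p.1))); last by lin_t.
  by apply: eq_bigr => r _; rewrite E.
transitivity (\sum_(r <- tau h) \sum_(q <- delta r.1) \sum_(q' <- delta r.2) K (q.1 * q'.1) q'.2 q.2).
  by apply: eq_bigr => r _; apply: eq_bigr => q _; rewrite E.
have hT : tril (fun x k l => \sum_(p' <- Delta l) K x p'.2 (k * S p'.1)) by lin_t.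
have E3 := K1 h hT; rewrite /= in E3.
rewrite (eq_bigr (fun p => K 1 p.2 (S p.1))) in E3; last by move=> p _; rewrite mul1r.
rewrite -E3.
apply: eq_bigr => r _; apply: eq_bigr => q _; apply: eq_bigr => q' _.
rewrite (Anti3 (W := fun k l => K (q.1 * q'.1) k l)) //; lin_t.
Qed.

End Ids2.

Lemma Anti2 (M : lmodType CC) (Z : H -> H -> M) y : bil Z ->
  \sum_(m <- Delta y) \sum_(n <- Delta m.2) Z (m.1 * S n.1) n.2 = Z 1 y.
Proof.
move=> hZ; have [z1 z2] := hZ; have lS := lin_S.
rewrite -(coassoc_D (T := fun a b d => Z (a * S b) d)); last by lin_t.
transitivity (\sum_(m <- Delta y) eps m.1 *: Z 1 m.2).
  apply: eq_bigr => m _.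
  have hl : lin (fun x => Z x m.2) by apply: z1.
  by rewrite -(linS hl) (hopf_antipoder hH) (linZ hl).
by rewrite (counitl (g := fun l => Z 1 l)) //; apply: z2.
Qed.

Lemma T6 (M : lmodType CC) (W : A -> A -> H -> H -> M) h : quadril W ->
  \sum_(r <- tau h) \sum_(b1 <- delta r.1) \sum_(b3 <- delta r.2) W b1.1 b3.1 b1.2 b3.2 =
  \sum_(n <- Delta h) \sum_(o <- Delta n.2) \sum_(r <- tau o.1) W r.1 r.2 (S n.1) o.2.
Proof.
move=> hW; have [w1 w2 w3 w4] := hW; have lS := lin_S.
rewrite (T3 (G := fun a c k => \sum_(b3 <- delta c) W a b3.1 k b3.2)); last by lin_t.
apply: eq_bigr => n _.
by rewrite (T2 (G := fun a b l => W a b (S n.1) l)) //; lin_t.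
Qed.

Notation inES := (inES delta).

Lemma inESE c : inES c -> forall (M : lmodType CC) (T : A -> A -> H -> M), tril T ->
  \sum_(p <- c) \sum_(q <- delta p.1) \sum_(r <- delta p.2) T q.1 r.1 (q.2 * r.2) =
  \sum_(p <- c) T p.1 p.2 1.
Proof.
move=> hc M T hT; have := hc M T hT.
rewrite big_flatten !big_map /=.
by under eq_bigr => p _ do rewrite big_allpairs_dep /=.
Qed.

Lemma inESI c : (forall (M : lmodType CC) (T : A -> A -> H -> M), tril T ->
  \sum_(p <- c) \sum_(q <- delta p.1) \sum_(r <- delta p.2) T q.1 r.1 (q.2 * r.2) =
  \sum_(p <- c) T p.1 p.2 1) -> inES c.
Proof.
move=> h M T hT; rewrite /Defs.inES big_flatten !big_map /=.
under eq_bigr => p _ do rewrite big_allpairs_dep /=.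
exact: h.
Qed.

Lemma inES_teq c d : teq2 c d -> inES c -> inES d.
Proof.
move=> cd hc; apply: inESI => M T hT; have [t1 t2 t3] := hT.
rewrite -(cd M (fun x y => \sum_(q <- delta x) \sum_(r <- delta y) T q.1 r.1 (q.2 * r.2))); last by lin_t.
by rewrite (inESE hc hT) (cd M (fun x y => T x y 1)) //; lin_t.
Qed.

Lemma inES_nil : inES [::].
Proof. by apply: inESI => *; rewrite !big_nil. Qed.

Lemma inES_cat c d : inES c -> inES d -> inES (c ++ d).
Proof. by move=> hc hd; apply: inESI => M T hT; rewrite !big_cat (inESE hc hT) (inESE hd hT). Qed.

Lemma inES_tscale a c : inES c -> inES (tscale a c).
Proof.
move=> hc; apply: inESI => M T hT; have [t1 t2 t3] := hT.
rewrite !big_map /=.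
have := inESE hc (T := fun u v k => a *: T u v k) ltac:(lin_t) => /= E.
transitivity (\sum_(p <- c) \sum_(q <- delta p.1) \sum_(r <- delta p.2) a *: T q.1 r.1 (q.2 * r.2)).
  apply: eq_bigr => p _.
  have hl : lin (fun x => \sum_(q <- delta x) \sum_(r <- delta p.2) T q.1 r.1 (q.2 * r.2)) by lin_t.
  rewrite (linZ hl) scaler_sumr; apply: eq_bigr => q _; by rewrite scaler_sumr.
rewrite E; apply: eq_bigr => p _; by rewrite (linZ (t1 _ _)).
Qed.

Lemma inES_flatten (cs : seq (seq (A * A))) : (forall c, c \in cs -> inES c) -> inES (flatten cs).
Proof.
elim: cs => [|c cs IH] h /=; first exact: inES_nil.
apply: inES_cat; first by apply: h; rewrite inE eqxx.
by apply: IH => d hd; apply: h; rewrite inE hd orbT.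
Qed.

Lemma inES_S e : inES e -> inES (ES_antipode delta tau e).
Proof.
move=> he; apply: inESI => M T hT; have [t1 t2 t3] := hT; have lS := lin_S.
rewrite /ES_antipode !big_flatten !big_map.
under eq_bigr => p _ do rewrite big_allpairs_dep /=.
under [RHS]eq_bigr => p _ do rewrite big_allpairs_dep /=.
pose V (u a : A) (h k : H) := \sum_(r <- tau h) T a (r.1 * u * r.2) k.
have hV : quadril V by rewrite /V; lin_t.
have := inESE he (T := fun u v k => \sum_(c' <- delta v) V u c'.1 c'.2 k) ltac:(lin_t).
rewrite /= => E.
transitivity (\sum_(p <- e) \sum_(b <- delta p.1) \sum_(c <- delta p.2)
    \sum_(c' <- delta c.1) V b.1 c'.1 c'.2 (b.2 * c.2)); last first.
  by rewrite E; apply: eq_bigr => p _; apply: eq_bigr => q _.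
apply: eq_bigr => p _.
transitivity (\sum_(q <- delta p.2) \sum_(m <- Delta q.2) \sum_(b2 <- delta p.1)
    \sum_(n <- Delta m.2) \sum_(o <- Delta n.2) \sum_(r <- tau o.1)
    T q.1 (r.1 * b2.1 * r.2) (m.1 * (S n.1 * b2.2 * o.2))).
  transitivity (\sum_(q <- delta p.2) \sum_(a <- delta q.1) \sum_(r <- tau q.2)
      \sum_(b <- delta (r.1 * p.1 * r.2)) T a.1 b.1 (a.2 * b.2)).
    by apply: eq_bigr => q _; rewrite exchange_big.
  rewrite (coassoc_d (T := fun u k l => \sum_(r <- tau l) \sum_(b <- delta (r.1 * p.1 * r.2))
      T u b.1 (k * b.2))); last by lin_t.
  apply: eq_bigr => q _; apply: eq_bigr => m _.
  transitivity (\sum_(r <- tau m.2) \sum_(b2 <- delta p.1) \sum_(b1 <- delta r.1)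
      \sum_(b3 <- delta r.2) T q.1 (b1.1 * b2.1 * b3.1) (m.1 * (b1.2 * b2.2 * b3.2))).
    apply: eq_bigr => r _.
    rewrite (delta_mul (g := fun a k => T q.1 a (m.1 * k))); last by lin_t.
    rewrite (delta_mul (g := fun a k => \sum_(b3 <- delta r.2) T q.1 (a * b3.1) (m.1 * (k * b3.2))));
      last by lin_t.
    by rewrite exchange_big.
  rewrite exchange_big /=; apply: eq_bigr => b2 _.
  by rewrite (T6 (W := fun a c k1 k3 => T q.1 (a * b2.1 * c) (m.1 * (k1 * b2.2 * k3)))) //; lin_t.
transitivity (\sum_(q <- delta p.2) \sum_(b2 <- delta p.1) \sum_(o <- Delta q.2)
    \sum_(r <- tau o.1) T q.1 (r.1 * b2.1 * r.2) (b2.2 * o.2)).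
  apply: eq_bigr => q _; rewrite exchange_big /=; apply: eq_bigr => b2 _.
  pose Zf := fun k l => \sum_(o <- Delta l) \sum_(r <- tau o.1)
      T q.1 (r.1 * b2.1 * r.2) (k * (b2.2 * o.2)).
  transitivity (Zf 1 q.2); last first.
    by rewrite /Zf; apply: eq_bigr => o _; apply: eq_bigr => r _; rewrite mul1r.
  rewrite -(Anti2 (Z := Zf)); last by rewrite /Zf; lin_t.
  apply: eq_bigr => m _; apply: eq_bigr => n _; apply: eq_bigr => o _; apply: eq_bigr => r _.
  by rewrite !mulrA.
rewrite exchange_big /=; apply: eq_bigr => b _.
rewrite (coassoc_d (T := fun a h k => V b.1 a h (b.2 * k))); last by lin_t.
by apply: eq_bigr => q _; apply: eq_bigr => o _.
Qed.

Section WithF.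
Variable f : A -> CC.
Hypotheses (hf : lin f) (hf1 : f 1 = 1).

Definition P x y : seq (A * A) := [seq (f (r.2 * y) *: q.1, r.1) | q <- delta x, r <- tau q.2].

Lemma sumP (M : lmodType CC) (g : A -> A -> M) x y : (forall v, lin (fun u => g u v)) ->
  \sum_(p <- P x y) g p.1 p.2 = \sum_(q <- delta x) \sum_(r <- tau q.2) f (r.2 * y) *: g q.1 r.1.
Proof.
move=> hg; rewrite big_allpairs_dep; apply: eq_bigr => q _; apply: eq_bigr => r _ /=.
exact: (linZ (hg _)).
Qed.

Lemma sumPG (M : lmodType CC) (G : A * A -> M) x y : (forall v, lin (fun u => G (u, v))) ->
  \sum_(p <- P x y) G p = \sum_(q <- delta x) \sum_(r <- tau q.2) f (r.2 * y) *: G (q.1, r.1).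
Proof.
move=> hg; rewrite big_allpairs_dep; apply: eq_bigr => q _; apply: eq_bigr => r _ /=.
exact: (linZ (hg _)).
Qed.

Lemma Bc0 c : inES c -> forall (M : lmodType CC) (t : A -> A -> A -> M), tril t ->
  \sum_(p <- c) \sum_(q <- delta p.1) \sum_(r <- tau q.2) t q.1 r.1 (r.2 * p.2) =
  \sum_(p <- c) t p.1 p.2 1.
Proof.
move=> hc M t ht; have [t1 t2 t3] := ht.
pose K u v k := \sum_(r' <- tau k) t u (v * r'.1) r'.2.
have hK : tril K by rewrite /K; lin_t.
have E u v w : t u v w = \sum_(q' <- delta w) K u (v * q'.1) q'.2.
  by rewrite (psi2 (g := fun a b => t u a b) v w).
transitivity (\sum_(p <- c) \sum_(q <- delta p.1) \sum_(s' <- delta p.2) K q.1 (1 * s'.1) (q.2 * s'.2)).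
  apply: eq_bigr => p _; apply: eq_bigr => q _.
  rewrite -(gtau (g := fun x k => \sum_(s' <- delta p.2) K q.1 (x * s'.1) (k * s'.2))); last by lin_t.
  apply: eq_bigr => r _; rewrite E.
  rewrite (delta_mul (g := fun a k => K q.1 (r.1 * a) k)); last by lin_t.
  by apply: eq_bigr => s _; apply: eq_bigr => s' _; rewrite !mulrA.
rewrite (inESE hc (T := fun u v k => K u (1 * v) k)); last by lin_t.
apply: eq_bigr => p _; rewrite E (delta1 (g := fun a k => K p.1 (p.2 * a) k)); last by lin_t.
by rewrite mulr1 mul1r.
Qed.

Lemma Dx x : exists D : seq (seq (A * A) * A),
  [/\ {in D, forall d, inES d.1},
      (forall (M : lmodType CC) (t : A -> A -> A -> M), tril t ->
        \sum_(q <- delta x) \sum_(r <- tau q.2) t q.1 r.1 r.2 =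
        \sum_(d <- D) \sum_(p <- d.1) t p.1 p.2 d.2) &
      F x = \sum_(d <- D) phi d.1 *: d.2].
Proof.
have [D [hD hT hFx]] := hF x; exists D; split => // M t ht.
have := hT M t ht; rewrite !big_flatten !big_map /=.
under eq_bigr => q _ do rewrite big_map /=.
move=> ->; apply: eq_bigr => d _; by rewrite big_map.
Qed.

Lemma inES_P x y : inES (P x y).
Proof.
have [D [hD hT _]] := Dx x.
apply: (inES_teq (c := flatten [seq tscale (f (d.2 * y)) d.1 | d <- D])).
  apply: teq2I => M G hGG; have [g1 g2] := hGG.
  rewrite (sumPG (G := G)) //.
  rewrite (hT M (fun u v w => f (w * y) *: G (u, v))); last by lin_t.
  rewrite big_flatten big_map; apply: eq_bigr => d _.
  rewrite (sum_tscale _ _ (G := G)) // scaler_sumr; apply: eq_bigr => p _.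
  by case: p.
apply: inES_flatten => c /mapP [d dD ->]; apply: inES_tscale; exact: hD.
Qed.

Definition Phi x y := phi (P x y).

Lemma tscale1 (c : seq (A * A)) : tscale 1 c = c.
Proof. by rewrite /tscale (eq_map (g := id)) ?map_id // => -[u v] /=; rewrite scale1r. Qed.

Lemma phi_cat c d : inES c -> inES d -> phi (c ++ d) = phi c + phi d.
Proof. by move=> hc hd; rewrite -{1}[c]tscale1 (char_lin hphi) // mul1r. Qed.

Lemma phi_nil : phi [::] = 0.
Proof.
have E := phi_cat inES_nil inES_nil; rewrite cat0s in E.
by apply: (addrI (phi [::])); rewrite addr0 -E.
Qed.

Lemma phi_flatten cs : (forall c, c \in cs -> inES c) -> phi (flatten cs) = \sum_(c <- cs) phi c.
Proof.
elim: cs => [|c cs IH] h /=; first by rewrite big_nil phi_nil.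
have hc : inES c by apply: h; rewrite inE eqxx.
have hcs : forall d, d \in cs -> inES d by move=> d hd; apply: h; rewrite inE hd orbT.
by rewrite phi_cat // ?IH // ?big_cons //; apply: inES_flatten.
Qed.

Lemma teq_P_lin1 a x x' y : teq2 (P (a *: x + x') y) (tscale a (P x y) ++ P x' y).
Proof.
apply: teq2I => M G hGG; have [g1 g2] := hGG.
rewrite big_cat (sum_tscale _ _ (G := G)) //.
rewrite !(sumPG (G := G)) //.
have hl : lin (fun x => \sum_(q <- delta x) \sum_(r <- tau q.2) f (r.2 * y) *: G (q.1, r.1)).
  by lin_t.
by rewrite hl.
Qed.

Lemma teq_P_lin2 a x y y' : teq2 (P x (a *: y + y')) (tscale a (P x y) ++ P x y').
Proof.
apply: teq2I => M G hGG; have [g1 g2] := hGG.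
rewrite big_cat /= (sum_tscale _ _ (G := G)) //.
rewrite !(sumPG (G := G)) // scaler_sumr -big_split /=.
apply: eq_bigr => q _; rewrite scaler_sumr -big_split /=; apply: eq_bigr => r _.
by rewrite mulrDr -scalerAr hf scalerDl scalerA.
Qed.

Lemma bilPhi : bil Phi.
Proof.
split=> [y|x] a u v; rewrite /Phi.
  rewrite (char_welldef hphi (inES_P _ _) (teq_P_lin1 a u v y)).
  by rewrite (char_lin hphi) //; apply: inES_P.
rewrite (char_welldef hphi (inES_P _ _) (teq_P_lin2 a x u v)).
by rewrite (char_lin hphi) //; apply: inES_P.
Qed.

Lemma PhiExt c : inES c -> phi c = \sum_(p <- c) Phi p.1 p.2.
Proof.
move=> hc.
have T : teq2 c (flatten [seq P p.1 p.2 | p <- c]).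
  apply: teq2I => M G hGG; have [g1 g2] := hGG.
  rewrite big_flatten big_map.
  under [RHS]eq_bigr => p _ do rewrite (sumPG (G := G)) //.
  rewrite (Bc0 hc (t := fun u v w => f w *: G (u, v))); last by lin_t.
  by apply: eq_bigr => p _; rewrite hf1 scale1r; case: p.
rewrite (char_welldef hphi hc T) phi_flatten ?big_map //.
by move=> d /mapP [p _ ->]; apply: inES_P.
Qed.

Lemma Fform x : F x = \sum_(q <- delta x) \sum_(r <- tau q.2) Phi q.1 r.1 *: r.2.
Proof.
have [D [hD hT ->]] := Dx x; have hP := bilPhi.
rewrite (hT A (fun u v w => Phi u v *: w)); last by lin_t.
rewrite big_seq [RHS]big_seq; apply: eq_bigr => d dD; rewrite (PhiExt (hD _ dD)) scaler_suml.
by apply: eq_bigr.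
Qed.

Lemma linF : lin F.
Proof.
have hP := bilPhi.
have hl : lin (fun x => \sum_(q <- delta x) \sum_(r <- tau q.2) Phi q.1 r.1 *: r.2) by lin_t.
by move=> a x y; rewrite !Fform; exact: hl.
Qed.

Lemma Fcolin (M : lmodType CC) (g : A -> H -> M) y : bil g ->
  \sum_(b <- delta (F y)) g b.1 b.2 = \sum_(b <- delta y) g (F b.1) b.2.
Proof.
move=> hg; have [g1 g2] := hg; have hP := bilPhi.
have hl : lin (fun z => \sum_(b <- delta z) g b.1 b.2) by lin_t.
rewrite Fform (linS hl).
transitivity (\sum_(q <- delta y) \sum_(m <- Delta q.2) \sum_(r <- tau m.1) Phi q.1 r.1 *: g r.2 m.2).
  apply: eq_bigr => q _; rewrite (linS hl).
  rewrite -(T2 (G := fun x y' k => Phi q.1 x *: g y' k)); last by lin_t.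
  by apply: eq_bigr => r _; rewrite (linZ hl) scaler_sumr.
rewrite -(coassoc_d (T := fun x k l => \sum_(r <- tau k) Phi x r.1 *: g r.2 l)); last by lin_t.
apply: eq_bigr => b _; rewrite Fform (linS (g1 _)); apply: eq_bigr => q _.
rewrite (linS (g1 _)); apply: eq_bigr => r _; by rewrite (linZ (g1 _)).
Qed.

Lemma inES_F e : inES e -> inES [seq (p.1, F p.2) | p <- e].
Proof.
move=> he; apply: inESI => M T hT; have [t1 t2 t3] := hT; have lF := linF.
rewrite !big_map /=.
rewrite -(inESE he (T := fun u v k => T u (F v) k)); last by lin_t.
apply: eq_bigr => p _; apply: eq_bigr => b _.
by rewrite (Fcolin (g := fun u k => T b.1 u (b.2 * k))) //; lin_t.
Qed.

Lemma CI e (M : lmodType CC) (Z : A -> H -> A -> H -> H -> M) : inES e ->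
  (forall k y l h, lin (fun x => Z x k y l h)) ->
  (forall x y l h, lin (fun k => Z x k y l h)) ->
  (forall x k l h, lin (fun y => Z x k y l h)) ->
  (forall x k y h, lin (fun l => Z x k y l h)) ->
  (forall x k y l, lin (fun h => Z x k y l h)) ->
  \sum_(p <- e) \sum_(q <- delta p.1) \sum_(m <- Delta q.2) \sum_(s <- delta p.2)
     \sum_(o <- Delta s.2) Z q.1 m.1 s.1 o.1 (m.2 * o.2) =
  \sum_(p <- e) \sum_(q <- delta p.1) \sum_(s <- delta p.2) Z q.1 q.2 s.1 s.2 1.
Proof.
move=> he z1 z2 z3 z4 z5.
rewrite -(inESE he (T := fun u v k => \sum_(q <- delta u) \sum_(s <- delta v) Z q.1 q.2 s.1 s.2 k));
  last by lin_t.
apply: eq_bigr => p _; symmetry.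
transitivity (\sum_(b <- delta p.1) \sum_(q <- delta b.1) \sum_(b' <- delta p.2)
   \sum_(s <- delta b'.1) Z q.1 q.2 s.1 s.2 (b.2 * b'.2)).
  by apply: eq_bigr => b _; rewrite exchange_big.
rewrite (coassoc_d (T := fun u k l => \sum_(b' <- delta p.2) \sum_(s <- delta b'.1)
   Z u k s.1 s.2 (l * b'.2))); last by lin_t.
apply: eq_bigr => q _; apply: eq_bigr => m _.
by rewrite (coassoc_d (T := fun v k' l' => Z q.1 m.1 v k' (m.2 * l'))) //; lin_t.
Qed.

Definition Psi x y := \sum_(s <- delta y) \sum_(t <- tau s.2) Phi s.1 (t.1 * x * t.2).

Lemma bilPsi : bil Psi.
Proof. have hP := bilPhi; rewrite /Psi; lin_t. Qed.

Lemma phiS g : inES g -> phi (ES_antipode delta tau g) = \sum_(v <- g) Psi v.1 v.2.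
Proof.
move=> hg; rewrite (PhiExt (inES_S hg)) /ES_antipode big_flatten big_map.
by apply: eq_bigr => v _; rewrite big_allpairs_dep.
Qed.

Section SSsec.
Variable M : lmodType CC.
Variable G : A * A -> M.
Hypothesis hGb : bil (fun u v => G (u, v)).

Definition Lam (q1 r1 s1 t1 x : A) (k : H) :=
  \sum_(r'' <- tau k) (f (x * r''.1) * Phi s1 (t1 * r''.2)) *: G (q1, r1).

Lemma Lam_lin :
  [/\ (forall r1 s1 t1 x k, lin (fun q1 => Lam q1 r1 s1 t1 x k)),
      (forall q1 s1 t1 x k, lin (fun r1 => Lam q1 r1 s1 t1 x k)),
      (forall q1 r1 t1 x k, lin (fun s1 => Lam q1 r1 s1 t1 x k)),
      (forall q1 r1 s1 x k, lin (fun t1 => Lam q1 r1 s1 t1 x k)) &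
      (forall q1 r1 s1 t1 k, lin (fun x => Lam q1 r1 s1 t1 x k))] /\
      (forall q1 r1 s1 t1 x, lin (fun k => Lam q1 r1 s1 t1 x k)).
Proof. have hP := bilPhi; have [g1 g2] := hGb; rewrite /Lam; split; [split|]; lin_t. Qed.

Lemma SS e : inES e ->
  \sum_(p <- e) \sum_(q <- delta p.1) \sum_(r <- tau q.2) \sum_(s <- delta p.2) \sum_(t <- tau s.2)
     Phi s.1 (t.1 * (r.2 * t.2)) *: G (q.1, r.1) =
  \sum_(p <- e) \sum_(q <- delta p.1) \sum_(r <- tau q.2) \sum_(s <- delta p.2) \sum_(t <- tau s.2)
     (f (r.2 * t.2) * Phi s.1 t.1) *: G (q.1, r.1).
Proof.
move=> he; have hP := bilPhi; have [[l1 l2 l3 l4 l5] l6] := Lam_lin.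
have [g1 g2] := hGb.
have E1 q1 r1 s1 t1 w : Phi s1 (t1 * w) *: G (q1, r1) = \sum_(b <- delta w) Lam q1 r1 s1 t1 b.1 b.2.
  have := psi2 (g := fun x y => (f x * Phi s1 (t1 * y)) *: G (q1, r1)) 1 w.
  rewrite hf1 mul1r => -> //; last by lin_t.
  by apply: eq_bigr => b _; rewrite /Lam; apply: eq_bigr => r'' _; rewrite mul1r.
have E2 q1 r1 s1 t1 w : (f w * Phi s1 t1) *: G (q1, r1) = Lam q1 r1 s1 t1 w 1.
  have := psi2 (g := fun x y => (f x * Phi s1 (t1 * y)) *: G (q1, r1)) w 1.
  rewrite mulr1 => -> //; last by lin_t.
  rewrite (delta1 (g := fun x k => \sum_(r'' <- tau k) (f (w * x * r''.1) * Phi s1 (t1 * r''.2)) *: G (q1, r1)));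
    last by lin_t.
  by rewrite /Lam; apply: eq_bigr => r'' _; rewrite mulr1.
transitivity (\sum_(p <- e) \sum_(q <- delta p.1) \sum_(r <- tau q.2) \sum_(s <- delta p.2) \sum_(t <- tau s.2)
   \sum_(b <- delta (r.2 * t.2)) Lam q.1 r.1 s.1 t.1 b.1 b.2).
  by do 5 (apply: eq_bigr => ? _); rewrite E1.
transitivity (\sum_(p <- e) \sum_(q <- delta p.1) \sum_(r <- tau q.2) \sum_(s <- delta p.2) \sum_(t <- tau s.2)
   Lam q.1 r.1 s.1 t.1 (r.2 * t.2) 1); last first.
  by do 5 (apply: eq_bigr => ? _); rewrite E2.
transitivity (\sum_(p <- e) \sum_(q <- delta p.1) \sum_(m <- Delta q.2) \sum_(r <- tau m.1)
   \sum_(s <- delta p.2) \sum_(t <- tau s.2) \sum_(b' <- delta t.2)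
   Lam q.1 r.1 s.1 t.1 (r.2 * b'.1) (m.2 * b'.2)).
  apply: eq_bigr => p _; apply: eq_bigr => q _.
  rewrite -(T2 (G := fun x y k => \sum_(s <- delta p.2) \sum_(t <- tau s.2) \sum_(b' <- delta t.2)
     Lam q.1 x s.1 t.1 (y * b'.1) (k * b'.2))); last by lin_t.
  apply: eq_bigr => r _.
  transitivity (\sum_(s <- delta p.2) \sum_(t <- tau s.2) \sum_(b <- delta r.2) \sum_(b' <- delta t.2)
     Lam q.1 r.1 s.1 t.1 (b.1 * b'.1) (b.2 * b'.2)).
    apply: eq_bigr => s _; apply: eq_bigr => t _.
    by rewrite (delta_mul (g := fun x k => Lam q.1 r.1 s.1 t.1 x k)) //; lin_t.
  under eq_bigr => s _ do rewrite exchange_big.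
  by rewrite exchange_big.
transitivity (\sum_(p <- e) \sum_(q <- delta p.1) \sum_(m <- Delta q.2) \sum_(s <- delta p.2)
   \sum_(o <- Delta s.2) \sum_(r <- tau m.1) \sum_(t <- tau o.1)
   Lam q.1 r.1 s.1 t.1 (r.2 * t.2) (m.2 * o.2)).
  apply: eq_bigr => p _; apply: eq_bigr => q _; apply: eq_bigr => m _.
  transitivity (\sum_(r <- tau m.1) \sum_(s <- delta p.2) \sum_(o <- Delta s.2) \sum_(t <- tau o.1)
     Lam q.1 r.1 s.1 t.1 (r.2 * t.2) (m.2 * o.2)).
    apply: eq_bigr => r _; apply: eq_bigr => s _.
    by rewrite (T2 (G := fun x y k => Lam q.1 r.1 s.1 x (r.2 * y) (m.2 * k))) //; lin_t.
  rewrite exchange_big /=; apply: eq_bigr => s _.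
  by rewrite exchange_big.
rewrite (CI (Z := fun x1 k1 y1 l1 hh => \sum_(r <- tau k1) \sum_(t <- tau l1)
   Lam x1 r.1 y1 t.1 (r.2 * t.2) hh)) //; try by move=> *; lin_t.
apply: eq_bigr => p _; apply: eq_bigr => q _.
by rewrite exchange_big.
Qed.

Lemma LR e : inES e ->
  \sum_(p <- e) \sum_(q <- delta p.1) \sum_(r <- tau q.2) Psi r.2 p.2 *: G (q.1, r.1) =
  \sum_(p <- e) G (p.1, F p.2).
Proof.
move=> he; have hP := bilPhi; have [g1 g2] := hGb.
transitivity (\sum_(p <- e) \sum_(q <- delta p.1) \sum_(r <- tau q.2) \sum_(s <- delta p.2) \sum_(t <- tau s.2)
     Phi s.1 (t.1 * (r.2 * t.2)) *: G (q.1, r.1)).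
  do 3 (apply: eq_bigr => ? _); rewrite /Psi scaler_suml; apply: eq_bigr => s _.
  by rewrite scaler_suml; apply: eq_bigr => t _; rewrite mulrA.
rewrite SS //.
transitivity (\sum_(p <- e) \sum_(q <- delta p.1) \sum_(r <- tau q.2) f (r.2 * F p.2) *: G (q.1, r.1)).
  apply: eq_bigr => p _; apply: eq_bigr => q _; apply: eq_bigr => r _.
  have hl : lin (fun z => f (r.2 * z)) by lin_t.
  rewrite Fform (linS hl) scaler_suml; apply: eq_bigr => s _.
  rewrite (linS hl) scaler_suml; apply: eq_bigr => t _.
  by rewrite (linZ hl) scCC mulrC.
have := Bc0 (inES_F he) (t := fun u v w => f w *: G (u, v)) ltac:(lin_t).
rewrite !big_map /= => ->.
by apply: eq_bigr => p _; rewrite hf1 scale1r.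
Qed.

End SSsec.

Section Dec.
Variable M : lmodType CC.

Lemma StepB (R : A -> A -> A -> A -> M) x z : quadril R ->
  \sum_(q <- delta x) \sum_(r <- tau q.2) \sum_(u <- P q.1 r.1) R u.1 u.2 r.2 z =
  \sum_(q <- delta x) \sum_(r <- tau q.2) R q.1 r.1 r.2 z.
Proof.
move=> hR; have [r1 r2 r3 r4] := hR.
transitivity (\sum_(q <- delta x) \sum_(q' <- delta q.1) \sum_(r <- tau q.2) \sum_(r' <- tau q'.2)
    f (r'.2 * r.1) *: R q'.1 r'.1 r.2 z).
  apply: eq_bigr => q _.
  rewrite (eq_bigr (fun r => \sum_(q' <- delta q.1) \sum_(r' <- tau q'.2)
      f (r'.2 * r.1) *: R q'.1 r'.1 r.2 z)); last first.
    by move=> r _; rewrite (sumP (g := fun a b => R a b r.2 z)).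
  by rewrite exchange_big.
rewrite (coassoc_d (T := fun a k l => \sum_(r <- tau l) \sum_(r' <- tau k)
    f (r'.2 * r.1) *: R a r'.1 r.2 z)); last by lin_t.
apply: eq_bigr => q _.
under eq_bigr => p _ do rewrite exchange_big /=.
rewrite (T5 (G := fun a b c => f b *: R q.1 a c z)) /=; last by lin_t.
by apply: eq_bigr => r _; rewrite hf1 scale1r.
Qed.

Lemma StepA e (R : A -> A -> A -> A -> M) : inES e -> quadril R ->
  \sum_(p <- e) \sum_(q <- delta p.1) \sum_(r <- tau q.2) \sum_(v <- P r.2 p.2) R q.1 r.1 v.1 v.2 =
  \sum_(p <- e) \sum_(q <- delta p.1) \sum_(r <- tau q.2) R q.1 r.1 r.2 p.2.
Proof.
move=> he hR; have [r1 r2 r3 r4] := hR.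
transitivity (\sum_(p <- e) \sum_(q <- delta p.1) \sum_(m <- Delta q.2) \sum_(r <- tau m.1)
   \sum_(r' <- tau m.2) f (r'.2 * p.2) *: R q.1 r.1 r.2 r'.1).
  apply: eq_bigr => p _; apply: eq_bigr => q _.
  rewrite -(T2 (G := fun a b k => \sum_(r' <- tau k) f (r'.2 * p.2) *: R q.1 a b r'.1)); last by lin_t.
  by apply: eq_bigr => r _; rewrite (sumP (g := fun a b => R q.1 r.1 a b)).
transitivity (\sum_(p <- e) \sum_(q <- delta p.1) \sum_(q'' <- delta q.1) \sum_(r <- tau q''.2)
   \sum_(r' <- tau q.2) f (r'.2 * p.2) *: R q''.1 r.1 r.2 r'.1).
  apply: eq_bigr => p _.
  by rewrite -(coassoc_d (T := fun a k l => \sum_(r <- tau k) \sum_(r' <- tau l)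
     f (r'.2 * p.2) *: R a r.1 r.2 r'.1)) //; lin_t.
transitivity (\sum_(p <- e) \sum_(q <- delta p.1) \sum_(r' <- tau q.2) f (r'.2 * p.2) *:
   \sum_(q'' <- delta q.1) \sum_(r <- tau q''.2) R q''.1 r.1 r.2 r'.1).
  apply: eq_bigr => p _; apply: eq_bigr => q _.
  under eq_bigr => q'' _ do rewrite exchange_big /=.
  rewrite exchange_big /=; apply: eq_bigr => r' _.
  by rewrite scaler_sumr; apply: eq_bigr => q'' _; rewrite scaler_sumr.
rewrite (Bc0 he (t := fun u v w => f w *: \sum_(q'' <- delta u) \sum_(r <- tau q''.2)
   R q''.1 r.1 r.2 v)); last by lin_t.
by apply: eq_bigr => p _; rewrite hf1 scale1r.
Qed.

Lemma Dec e (Q : A -> A -> A -> A -> M) : inES e -> quadril Q ->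
  \sum_(p <- e) \sum_(q <- delta p.1) \sum_(r <- tau q.2) \sum_(u <- P q.1 r.1)
     \sum_(v <- P r.2 p.2) Q u.1 u.2 v.1 v.2 =
  \sum_(p <- e) \sum_(q <- delta p.1) \sum_(r <- tau q.2) Q q.1 r.1 r.2 p.2.
Proof.
move=> he hQ; have [q1 q2 q3 q4] := hQ.
rewrite -(StepA he hQ); apply: eq_bigr => p _.
pose R0 := fun a b c d => \sum_(q' <- delta c) \sum_(r' <- tau q'.2) f (r'.2 * d) *: Q a b q'.1 r'.1.
transitivity (\sum_(q <- delta p.1) \sum_(r <- tau q.2) \sum_(u <- P q.1 r.1) R0 u.1 u.2 r.2 p.2).
  apply: eq_bigr => q _; apply: eq_bigr => r _; apply: eq_bigr => u _.
  by rewrite (sumP (g := fun a b => Q u.1 u.2 a b)).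
rewrite (StepB (R := R0)); last by rewrite /R0; lin_t.
apply: eq_bigr => q _; apply: eq_bigr => r _.
by rewrite (sumP (g := fun a b => Q q.1 r.1 a b)).
Qed.

End Dec.

Definition decomp e := [seq (P t.1.1.1 t.1.1.2, P t.1.2 t.2) | t <- ES_coprod delta tau e].

Lemma sum_coprod (M : lmodType CC) e (Q : A * A * A * A -> M) :
  \sum_(t <- ES_coprod delta tau e) Q t =
  \sum_(p <- e) \sum_(q <- delta p.1) \sum_(r <- tau q.2) Q (q.1, r.1, r.2, p.2).
Proof.
rewrite /ES_coprod big_flatten big_map; apply: eq_bigr => p _.
by rewrite big_allpairs_dep.
Qed.

Lemma decomp_ok e : inES e -> decompCC delta (ES_coprod delta tau e) (decomp e).
Proof.
move=> he; split.
  by move=> d /mapP [t _ ->]; split; apply: inES_P.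
apply: teq4I => M Q hQ; have [q1 q2 q3 q4] := hQ.
apply: (etrans (sum_coprod e Q)); symmetry.
rewrite big_flatten /decomp big_map.
rewrite big_map /=. apply: (etrans (sum_coprod e _)) => /=.
rewrite -(Dec he (Q := fun a b c d => Q (a, b, c, d))) //.
do 3 (apply: eq_bigr => ? _); by rewrite big_allpairs_dep.
Qed.

Lemma main_f c : inES c -> coinn_val delta tau phi c (Ad F c).
Proof.
move=> hc.
exists [seq ((P t.1.1.1 t.1.1.2, P t.1.2 t.2), decomp (P t.1.2 t.2)) | t <- ES_coprod delta tau c].
split.
- by rewrite -map_comp; exact: decomp_ok.
- by move=> x /mapP [t _ ->]; apply: decomp_ok; apply: inES_P.
apply: teq2I => M G hGG; have [g1 g2] := hGG; have hP := bilPhi; have hPs := bilPsi.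
have lF := linF.
have inner e' : inES e' ->
    \sum_(w <- flatten [seq tscale (phi (ES_antipode delta tau g.2)) g.1 | g <- decomp e']) G w =
    \sum_(p <- e') G (p.1, F p.2).
  move=> he'; rewrite -(LR hGG he') big_flatten big_map /decomp big_map.
  transitivity (\sum_(t <- ES_coprod delta tau e') \sum_(u <- P t.1.1.1 t.1.1.2)
     \sum_(v <- P t.1.2 t.2) Psi v.1 v.2 *: G u).
    apply: eq_bigr => t _ /=; rewrite (sum_tscale _ _ (G := G)) // (phiS (inES_P _ _)).
    rewrite scaler_suml exchange_big /=; apply: eq_bigr => v _.
    by rewrite scaler_sumr.
  apply: (etrans (sum_coprod e' _)) => /=.
  rewrite -(Dec he' (Q := fun a b c d => Psi c d *: G (a, b))); last by lin_t.
  by do 3 (apply: eq_bigr => ? _); apply: eq_bigr => -[? ?] _.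
rewrite big_flatten !big_map.
transitivity (\sum_(t <- ES_coprod delta tau c) \sum_(u <- P t.1.1.1 t.1.1.2)
   \sum_(v <- P t.1.2 t.2) Phi u.1 u.2 *: G (v.1, F v.2)); last first.
  apply: eq_bigr => t _ /=; rewrite (sum_tscale _ _ (G := G)) // (inner _ (inES_P _ _)).
  rewrite /Phi (PhiExt (inES_P _ _)) scaler_suml; apply: eq_bigr => u _.
  by rewrite scaler_sumr.
symmetry; apply: (etrans (sum_coprod c _)) => /=.
rewrite (Dec hc (Q := fun a b c' d => Phi a b *: G (c', F d))); last by lin_t.
apply: eq_bigr => p _; symmetry; rewrite [F p.1]Fform (linS (g1 _)); apply: eq_bigr => q _.
rewrite (linS (g1 _)); apply: eq_bigr => r _; by rewrite (linZ (g1 _)).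
Qed.

End WithF.

End Main.


Module ZornPart.
Import boolp classical_sets.
Local Open Scope classical_set_scope.



Section ZornF.
Variables (V : lmodType CC) (v : V).
Hypothesis v0 : v != 0.

Let P (K : set V) := (forall (a : CC) x y, K x -> K y -> K (a *: x + y)) /\ ~ K v.

Lemma exists_maxK : exists K, P K /\ forall B, K `<` B -> ~ P B.
Proof.
apply: Zorn_bigcup => Fm FP Ftot; split.
- move=> a x y [X FX Xx] [Y FY Yy].
  have [XY|YX] := Ftot _ _ FX FY.
  + exists Y => //; apply: (proj1 (FP _ FY)) => //; exact: XY.
  + exists X => //; apply: (proj1 (FP _ FX)) => //; exact: YX.
- by move=> [X FX Xv]; exact: (proj2 (FP _ FX)).
Qed.


Lemma exists_functional : exists f : V -> CC, lin f /\ f v = 1.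
Proof.
have [K [[Kcl Kv] Kmax]] := exists_maxK.
have K0 : K 0.
  apply: contrapT => nK0.
  have [k Kk] : exists k, K k.
    apply: contrapT => nK; apply: (Kmax [set 0]).
    - split; first by move=> x /= Kx; exfalso; apply: nK; exists x.
      by move=> /(_ 0 erefl).
    - split; first by move=> /= a x y -> ->; rewrite scaler0 addr0.
      by move=> /= /eqP; rewrite (negbTE v0).
  by apply: nK0; have := Kcl (-1) k k Kk Kk; rewrite scaleN1r addNr.
have KZ a x : K x -> K (a *: x) by move=> Kx; have := Kcl a x 0 Kx K0; rewrite addr0.
have KD x y : K x -> K y -> K (x + y) by move=> Kx Ky; have := Kcl 1 x y Kx Ky; rewrite scale1r.
have KN x : K x -> K (- x) by move=> Kx; have := KZ (-1) x Kx; rewrite scaleN1r.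
have ex x : exists l : CC, K (x - l *: v).
  apply: contrapT => nex.
  pose B := [set y | exists k, exists m : CC, K k /\ y = k + m *: x].
  apply: (Kmax B).
  - split.
    + by move=> y Ky; exists y, 0; rewrite scale0r addr0.
    + move=> BK; apply: nex; exists 0; rewrite scale0r subr0.
      by apply: BK; exists 0, 1; rewrite scale1r add0r.
  - split.
    + move=> a y z [k [m [Kk ->]]] [k' [m' [Kk' ->]]].
      exists (a *: k + k'), (a * m + m'); split; first exact: Kcl.
      by rewrite scalerDr scalerA scalerDl addrACA.
    + move=> [k [m [Kk Ev]]].
      have [m0|mn0] := eqVneq m 0.
        by apply: Kv; move: Ev; rewrite m0 scale0r addr0 => ->.
      apply: nex; exists m^-1.
      have -> : x - m^-1 *: v = - (m^-1 *: k).
        rewrite Ev scalerDr scalerA mulVf // scale1r.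
        by rewrite opprD addrCA subrr addr0.
      exact/KN/KZ.
have uniq x l m : K (x - l *: v) -> K (x - m *: v) -> l = m.
  move=> Kl Km; apply/eqP; apply: contraT => lm.
  have : K ((m - l) *: v).
    have -> : (m - l) *: v = (x - l *: v) - (x - m *: v).
      by rewrite scalerBl opprB [RHS]addrC [RHS]addrA subrK.
    exact/KD/KN.
  move=> /(KZ (m - l)^-1); rewrite scalerA mulVf ?scale1r //.
  by rewrite subr_eq0 eq_sym.
pose f x := sval (cid (ex x)).
have fP x : K (x - f x *: v) by rewrite /f; case: (cid (ex x)).
exists f; split.
  move=> a x y; apply: (uniq _ _ _ (fP (a *: x + y))).
  have -> : a *: x + y - (a *: f x + f y) *: v = a *: (x - f x *: v) + (y - f y *: v).
    by rewrite scalerDl scalerBr scalerA opprD addrACA.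
  exact: Kcl.
by apply: esym; apply: (uniq _ _ _ _ (fP v)); rewrite scale1r subrr.
Qed.
End ZornF.

End ZornPart.

Unset Implicit Arguments.

Theorem lemma5p7 (H A : algType CC) (Delta : H -> seq (H * H)) (eps : H -> CC)
    (S : H -> H) (delta : A -> seq (A * H)) (tau : H -> seq (A * A))
    (phi : seq (A * A) -> CC) (F : A -> A) :
  is_hopf Delta eps S ->
  is_galois_object Delta eps delta ->
  (forall h, teq2 (galois_map delta (tau h)) [:: (1, h)]) ->
  is_character delta phi ->
  Fphi_spec delta tau phi F ->
  forall c, inES delta c -> coinn_val delta tau phi c (Ad F c).
Proof.
move=> hH hG htau hphi hF c hc.
have [f [hf hf1]] := ZornPart.exists_functional (oner_neq0 A).
exact: (main_f hH hG htau hphi hF hf hf1 hc).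
Qed.
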